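(* Let $\mathbb{F}$ be a finite field of odd characteristic and $\lambda$ the quadratic character of $\mathbb{F}^\times$ extended by $\lambda(0)=0$. For $z\in\mathbb{F}$ and $\gamma\in\mathbb{F}^\times$ let $X_{\mathbb{F},\gamma}(z)=\{(u,v)\in\mathbb{F}^2: v^2-(u^2-uz-4\gamma)v+\gamma z^2=0\}$. Then $$|X_{\mathbb{F},\gamma}(z)|=|\mathbb{F}|(1+\delta_{z,0})-1+\sum_{x\in\mathbb{F}}\lambda\big(x(x+16\gamma)(x+z^2)\big),$$ where $\delta_{z,0}=1$ if $z=0$ and $0$ otherwise. *)

(* Defs.v *)
From HB Require Import structures.
From mathcomp Require Import all_boot all_order all_algebra all_field.
Set Implicit Arguments. Unset Strict Implicit. Unset Printing Implicit Defensive.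
Import GRing.Theory Num.Theory.
Local Open Scope ring_scope.

Definition qchar (F : finFieldType) (x : F) : int :=
  if x == 0 then 0 else if [exists y : F, y ^+ 2 == x] then 1 else -1.

Definition Xset (F : finFieldType) (gamma z : F) : {set F * F} :=
  [set uv : F * F | uv.2 ^+ 2 - (uv.1 ^+ 2 - uv.1 * z - 4%:R * gamma) * uv.2
                    + gamma * z ^+ 2 == 0].

(* Main.v *)
Require Import Defs.
From HB Require Import structures.
From mathcomp Require Import all_boot all_order all_algebra all_field.
From mathcomp Require Import ring.
Import GRing.Theory Num.Theory.
Local Open Scope ring_scope.

Lemma sqcount (F : finFieldType) (h2 : (2%:R : F) != 0) (d : F) :
  #|[set w : F | w ^+ 2 == d]|%:Z = 1 + qchar d.
Proof.
rewrite /qchar; have [->|d0] := eqVneq d 0.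
  have -> : [set w : F | w ^+ 2 == 0] = [set 0].
    by apply/setP => w; rewrite !inE sqrf_eq0.
  by rewrite cards1 addr0.
case: ifP => [/existsP [y /eqP Hy]|/existsP Hn].
  have -> : [set w : F | w ^+ 2 == d] = [set y; -y].
    by apply/setP => w; rewrite !inE -Hy eqf_sqr.
  rewrite cards2.
  have -> : (y != - y) = true.
    apply/negP => /eqP E.
    have : y *+ 2 == 0 by rewrite mulr2n {1}E addNr.
    rewrite -mulr_natl mulf_eq0 (negbTE h2) /= => /eqP y0.
    by move: d0; rewrite -Hy y0 expr0n /= eqxx.
  by rewrite -[1 + 1]/((1 + 1)%N%:Z).
have -> : [set w : F | w ^+ 2 == d] = set0.
  by apply/setP => w; rewrite !inE; apply/negP => H; apply: Hn; exists w.
by rewrite cards0 subrr.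
Qed.

Lemma quadcount (F : finFieldType) (h2 : (2%:R : F) != 0) (a b : F) :
  #|[set u : F | u ^+ 2 + a * u + b == 0]|%:Z = 1 + qchar (a ^+ 2 - 4%:R * b).
Proof.
have inj : injective (fun u : F => 2%:R * u + a).
  by move=> x y /addIr /(mulfI h2).
rewrite -sqcount // -(card_preimset [set w : F | w ^+ 2 == _] inj); congr (_ %:Z); apply: eq_card => u.
rewrite !inE -[in RHS]subr_eq0.
have -> : (2%:R * u + a) ^+ 2 - (a ^+ 2 - 4%:R * b) = 4%:R * (u ^+ 2 + a * u + b).
  by ring.
have h4 : (4%:R : F) != 0 by rewrite (_ : 4 = 2 * 2)%N // natrM mulf_neq0.
by rewrite mulf_eq0 (negbTE h4).
Qed.

Lemma qcharM2 (F : finFieldType) (a s : F) : s != 0 -> qchar (a * s ^+ 2) = qchar a.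
Proof.
move=> s0; rewrite /qchar mulf_eq0 sqrf_eq0 (negbTE s0) orbF.
case: eqP => // _; congr (if _ then _ else _).
apply/existsP/existsP => -[y /eqP Hy]; [exists (y / s) | exists (y * s)]; apply/eqP.
  by rewrite expr_div_n Hy mulfK // sqrf_eq0.
by rewrite exprMn Hy.
Qed.
Lemma card_by2 (F : finType) (A : {set F * F}) :
  #|A| = (\sum_(v : F) #|[set u | (u, v) \in A]|)%N.
Proof.
rewrite -sum1_card (partition_big snd predT) //=.
apply: eq_bigr => v _.
rewrite sum1_card.
have inj : injective (fun u : F => (u, v)) by move=> x y [].
rewrite -(card_imset _ inj).
apply: eq_card => -[a b]; rewrite unfold_in /=.
apply/andP/imsetP => [[H /eqP /= E]|[u]].
  by exists a; rewrite ?inE -?E.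
by rewrite inE => H [-> ->].
Qed.

Theorem lemma3p4 (F : finFieldType) (hodd : (2 \notin [pchar F])%N)
  (gamma z : F) (hgamma : gamma != 0) :
  (#|Xset gamma z|%:Z =
     #|F|%:Z * (1 + (z == 0)%:Z) - 1
     + \sum_(x : F) qchar (x * (x + 16%:R * gamma) * (x + z ^+ 2)))%R.
Proof.
have h2 : (2%:R : F) != 0.
  by apply: contraNN hodd => h; rewrite inE /= h.
have h4 : (4%:R : F) != 0 by rewrite (_ : 4 = 2 * 2)%N // natrM mulf_neq0.
set h := fun x : F => x * (x + 16%:R * gamma) * (x + z ^+ 2).
have key : forall v : F, #|[set u | (u, v) \in Xset gamma z]|%:Z =
   (if v == 0 then (if z == 0 then Posz #|F| else 0) else 1) + qchar (h (4%:R * v)).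
  move=> v.
  have [->|v0] := eqVneq v (0 : F).
    rewrite /h mulr0 !mul0r /qchar eqxx addr0.
    have [->|z0] := eqVneq z 0.
      congr (_ %:Z); rewrite -cardsT; apply: eq_card => u.
      by rewrite !inE /= expr0n /= mulr0 subr0 add0r mulr0 eqxx.
    suff -> : [set u | (u, 0) \in Xset gamma z] = set0 by rewrite cards0.
    apply/setP => u; rewrite !inE /= expr0n /= mulr0 subr0 add0r.
    by rewrite mulf_eq0 (negbTE hgamma) sqrf_eq0 (negbTE z0).
  set b := - (v ^+ 2 + 4%:R * gamma * v + gamma * z ^+ 2) / v.
  have -> : [set u | (u, v) \in Xset gamma z] = [set u : F | u ^+ 2 + (- z) * u + b == 0].
    apply/setP => u; rewrite !inE /=.
    have -> : v ^+ 2 - (u ^+ 2 - u * z - 4%:R * gamma) * v + gamma * z ^+ 2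
              = - v * (u ^+ 2 + (- z) * u + b) by rewrite /b; field.
    by rewrite mulf_eq0 oppr_eq0 (negbTE v0).
  rewrite quadcount //; congr (_ + _).
  have -> : h (4%:R * v) = ((- z) ^+ 2 - 4%:R * b) * (4%:R * v) ^+ 2.
    by rewrite /h /b; field.
  by rewrite qcharM2 // mulf_neq0.
rewrite card_by2 -natz natr_sum.
under eq_bigr => v _ do rewrite natz key.
rewrite big_split /=; congr (_ + _); last by rewrite [RHS](reindex_inj (mulfI h4)).
rewrite (bigD1 0) //= eqxx (eq_bigr (fun _ => 1)); last by move=> i /negbTE ->.
rewrite sumr_const cardC1.
have q0 : (0 < #|F|)%N by apply/card_gt0P; exists 0.
rewrite natz (predn_int q0).
by case: (z == 0) => /=; rewrite ?mulr1 ?mulr2n ?addr0 ?add0r // mulrDr mulr1 addrA.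
Qed.
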